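(* Let $A=kQ/I$ be a triangular quadratic string algebra and let $n\ge 2$. (a) For every $f\in\mathcal{B}^n_-$, one has $f-f_+\in{\rm Im}\,\delta^{n-1}$. (b) For every $g\in\mathcal{B}^n_+$, one has $g-g_-\in{\rm Im}\,\delta^{n-1}$.
   Context: $k$ is a field, $Q$ a finite quiver without oriented cycles, $I$ an admissible ideal of $kQ$ generated by paths of length 2, $A=kQ/I$; paths are composed left to right, $\overline{x}$ denotes the class of $x$ modulo $I$. String algebra: (S1) $I$ generated by paths; (S2) each vertex is the source of at most two arrows and the target of at most two arrows; (S3) for each arrow $\alpha$ there is at most one arrow $\beta$ with $\alpha\beta\notin I$ and at most one arrow $\gamma$ with $\gamma\alpha\notin I$. For an arrow $\alpha$, $\langle\alpha\rangle$ is the two-sided ideal of $kQ$ generated by $\alpha$ (a path lies in it iff $\alpha$ occurs in it). Let $E$ be the subalgebra of $A$ spanned by the vertex idempotents. Set $\Gamma_0=Q_0$, $\Gamma_1=Q_1$, and for $n\ge2$, $\Gamma_n=\{\alpha_1\cdots\alpha_n : \alpha_i \text{ arrows}, \alpha_i\alpha_{i+1}\in I \text{ for } 1\le i<n\}$; $k\Gamma_n$ is the $E$-$E$-bimodule they span. Let $\mathcal{C}^n=\mathrm{Hom}_{E\text{-}E}(k\Gamma_n,A)$, with differential $\delta^n:\mathcal{C}^n\to\mathcal{C}^{n+1}$, $(\delta^n\phi)(\alpha_1\cdots\alpha_{n+1})=\overline{\alpha_1}\,\phi(\alpha_2\cdots\alpha_{n+1})+(-1)^{n+1}\phi(\alpha_1\cdots\alpha_n)\,\overline{\alpha_{n+1}}$.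 A basis of $\mathcal{C}^n$ consists of the pairs $(\alpha_1\cdots\alpha_n,\overline{p})$ with $\alpha_1\cdots\alpha_n\in\Gamma_n$ and $p\notin I$ a path from $s(\alpha_1)$ to $t(\alpha_n)$; this pair denotes the map sending $\alpha_1\cdots\alpha_n$ to $\overline p$ and all other elements of $\Gamma_n$ to $0$. $\mathcal{B}^n_-$ is the set of basis elements of the form $(\alpha_1\cdots\alpha_n,\overline{\alpha_1p})$; $\mathcal{B}^n_0$ those $(\alpha_1\cdots\alpha_n,\overline w)$ with $w\notin\langle\alpha_1\rangle$, $w\notin\langle\alpha_n\rangle$; $\mathcal{B}^n_+$ those $(\alpha_1\cdots\alpha_n,\overline{q\alpha_n})$ with $q\notin\langle\alpha_1\rangle$. For $f=(\alpha_1\cdots\alpha_n,\overline{\alpha_1p})\in\mathcal{B}^n_-$, define $f_+\in\mathcal{C}^n$ by $f_+(\alpha_2\cdots\alpha_{n+1})=(-1)^{n+1}\overline{p\alpha_{n+1}}$ for every arrow $\alpha_{n+1}$ with $\alpha_2\cdots\alpha_{n+1}\in\Gamma_n$, and $f_+=0$ on all other elements of $\Gamma_n$. For $g=(\alpha_1\cdots\alpha_n,\overline{q\alpha_n})\in\mathcal{B}^n_+$, define $g_-\in\mathcal{C}^n$ by $g_-(\alpha_0\alpha_1\cdots\alpha_{n-1})=(-1)^{n+1}\overline{\alpha_0q}$ for every arrow $\alpha_0$ with $\alpha_0\alpha_1\cdots\alpha_{n-1}\in\Gamma_n$, and $g_-=0$ on all other elements of $\Gamma_n$. *)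

(* Defs.v *)
From mathcomp Require Import all_boot all_order all_algebra.
Set Implicit Arguments. Unset Strict Implicit. Unset Printing Implicit Defensive.
Import GRing.Theory.
Local Open Scope ring_scope.

(* Quiver Q: vertices V, arrows Ar, source/target maps src/tgt.
   rel a b = true means "the length-2 path ab lies in I"; I is the ideal of kQ
   generated by the composable such paths (quadratic monomial ideal).
   A path is a pair (start vertex, list of arrows, composed left to right). *)

Definition apath (V Ar : finType) := (V * seq Ar)%type.

Section Defs.
Context {V Ar : finType} (src tgt : Ar -> V) (rel : rel Ar).

Fixpoint comp_from (v : V) (s : seq Ar) : bool :=
  if s is a :: s' then (src a == v) && comp_from (tgt a) s' else true.

Definition psrc (p : apath V Ar) : V := p.1.
Definition ptgt (p : apath V Ar) : V := last p.1 [seq tgt a | a <- p.2].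

(* p is a path of Q not lying in I (i.e. its class is a basis vector of A) *)
Definition nzpath (p : apath V Ar) : bool :=
  comp_from p.1 p.2 && sorted (fun a b => ~~ rel a b) p.2.

Definition triangular : Prop :=
  forall (v : V) (s : seq Ar), s != [::] -> comp_from v s -> ptgt (v, s) != v.

(* (S2) and (S3); (S1) holds by construction *)
Definition string_alg : Prop :=
  (forall v : V, #|[pred a | src a == v]| <= 2 /\ #|[pred a | tgt a == v]| <= 2)%N /\
  (forall a : Ar,
     #|[pred b | (tgt a == src b) && ~~ rel a b]| <= 1 /\
     #|[pred c | (tgt c == src a) && ~~ rel c a]| <= 1)%N.

Definition gamma (n : nat) (g : seq Ar) : bool :=
  [&& size g == n, sorted (fun a b => tgt a == src b) g & sorted rel g].

Section Alg.
Variable k : fieldType.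

(* elements of A = kQ/I, given by their coordinates on the basis of classes
   of paths not in I *)
Definition alg := apath V Ar -> k.

Definition cls (p : apath V Ar) : alg :=
  fun q => if nzpath p && (q == p) then 1 else 0.

Definition lmul (a : Ar) (x : alg) : alg :=
  fun q => if q.2 is b :: s then
             if [&& b == a, q.1 == src a & nzpath q] then x (tgt a, s) else 0
           else 0.

Definition rmul (x : alg) (a : Ar) : alg :=
  fun q => if rev q.2 is b :: s then
             if (b == a) && nzpath q then x (q.1, rev s) else 0
           else 0.

Definition cochain := seq Ar -> alg.

(* phi belongs to C^n = Hom_{E-E}(k Gamma_n, A) (n >= 1) *)
Definition is_cochain (n : nat) (phi : cochain) : Prop :=
  forall (a : Ar) (g : seq Ar), gamma n (a :: g) ->
  forall q : apath V Ar, phi (a :: g) q != 0 ->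
    [&& nzpath q, psrc q == src a & ptgt q == tgt (last a g)].

Definition delta (m : nat) (phi : cochain) : cochain :=
  fun g q => if g is a :: g' then
      lmul a (phi g') q + (-1) ^+ m.+1 * rmul (phi (belast a g')) (last a g') q
    else 0.

Definition in_image (n : nat) (h : cochain) : Prop :=
  exists phi : cochain, is_cochain n.-1 phi /\
    forall g : seq Ar, gamma n g -> forall q : apath V Ar, delta n.-1 phi g q = h g q.

(* B^n_- : f = (a1 a2...an, \overline{a1 p}) with p = (tgt a1, ps) *)
Definition in_Bminus (n : nat) (a1 : Ar) (g' ps : seq Ar) : bool :=
  [&& gamma n (a1 :: g'), nzpath (src a1, a1 :: ps) &
      ptgt (src a1, a1 :: ps) == tgt (last a1 g')].

Definition fBm (n : nat) (a1 : Ar) (g' ps : seq Ar) : cochain :=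
  fun g0 => if gamma n g0 && (g0 == a1 :: g') then cls (src a1, a1 :: ps)
            else fun _ => 0.

(* f_+ : a2...an a_(n+1) |-> (-1)^(n+1) \overline{p a_(n+1)} *)
Definition fplus (n : nat) (a1 : Ar) (g' ps : seq Ar) : cochain :=
  fun g0 q => if gamma n g0 && (g0 == rcons g' (last a1 g0))
              then (-1) ^+ n.+1 * cls (tgt a1, rcons ps (last a1 g0)) q else 0.

(* B^n_+ : g = (a1...a_(n-1) an, \overline{q an}) with q = (src a1, qs),
   a1 not occurring in q *)
Definition in_Bplus (n : nat) (a1 : Ar) (g'' : seq Ar) (an : Ar) (qs : seq Ar)
  : bool :=
  [&& gamma n (a1 :: rcons g'' an), nzpath (src a1, rcons qs an) &
      a1 \notin qs].

Definition gBp (n : nat) (a1 : Ar) (g'' : seq Ar) (an : Ar) (qs : seq Ar)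
  : cochain :=
  fun g0 => if gamma n g0 && (g0 == a1 :: rcons g'' an)
            then cls (src a1, rcons qs an) else fun _ => 0.

(* g_- : a0 a1 ... a_(n-1) |-> (-1)^(n+1) \overline{a0 q} *)
Definition gminus (n : nat) (a1 : Ar) (g'' : seq Ar) (qs : seq Ar) : cochain :=
  fun g0 q => if g0 is a0 :: rest then
                if gamma n g0 && (rest == a1 :: g'')
                then (-1) ^+ n.+1 * cls (src a0, a0 :: qs) q else 0
              else 0.

Definition csub (f h : cochain) : cochain := fun g q => f g q - h g q.

End Alg.
End Defs.

(* Main.v *)
Require Import Defs.
From mathcomp Require Import all_boot all_order all_algebra.
From mathcomp Require Import ring.
Set Implicit Arguments. Unset Strict Implicit. Unset Printing Implicit Defensive.
Import GRing.Theory.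
Local Open Scope ring_scope.

Section L.
Variables (k : fieldType) (V Ar : finType) (src tgt : Ar -> V) (rel : rel Ar).
Local Notation nz := (nzpath src tgt rel).
Local Notation cls := (cls src tgt rel k).
Local Notation lmul := (lmul src tgt rel (k:=k)).
Local Notation rmul := (rmul src tgt rel (k:=k)).

Lemma comp_rcons v s x : comp_from src tgt v (rcons s x) =
  comp_from src tgt v s && (src x == last v [seq tgt a | a <- s]).
Proof.
elim: s v => [|a s IH] v /=; first by rewrite andbT.
by rewrite IH andbA.
Qed.

Lemma nz_tail v a s : nz (v, a :: s) -> nz (tgt a, s).
Proof.
rewrite /nzpath /= => /andP[/andP[_ ->] /path_sorted] //.
Qed.

Lemma nz_cons v a s : nz (v, a :: s) -> src a = v.
Proof. by rewrite /nzpath /= => /andP[/andP[/eqP]]. Qed.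

Lemma nz_rcons v s x : nz (v, rcons s x) -> nz (v, s).
Proof.
rewrite /nzpath /= comp_rcons => /andP[/andP[-> _]].
case: s => //= a s; rewrite rcons_path => /andP[] //.
Qed.

Lemma lmul_cls a v s q :
  lmul a (cls (v, s)) q = if tgt a == v then cls (src a, a :: s) q else 0.
Proof.
case: q => w t; rewrite /lmul /cls /=.
case: t => [|b t] /=; first by rewrite xpair_eqE /= !andbF; case: ifP.
rewrite !xpair_eqE /=.
rewrite eqseq_cons.
have [->|nba] := eqVneq b a; last by rewrite /= ?(negbTE nba) ?andbF /= ?if_same.
have [->|nw] := eqVneq w (src a); last by rewrite /= ?(negbTE nw) ?andbF /= ?if_same.
have [->|nt] := eqVneq t s; last by rewrite /= ?(negbTE nt) ?andbF /= ?if_same.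
rewrite /= !andbT.
have [<-|nv] := eqVneq (tgt a) v; last by rewrite ?andbF /= ?if_same.
by case H: (nz (src a, a :: s)) => //; rewrite andbT (nz_tail H).
Qed.

Lemma rmul_cls v s x q :
  rmul (cls (v, s)) x q = cls (v, rcons s x) q.
Proof.
case: q => w t; rewrite /rmul /cls /=.
case: (lastP t) => [|t' b]; first by case: s => [|? ?]; rewrite xpair_eqE /= ?andbF.
rewrite rev_rcons /= revK !xpair_eqE eqseq_rcons.
have [->|nba] := eqVneq b x; last by rewrite /= ?(negbTE nba) ?andbF /= ?if_same.
have [->|nw] := eqVneq w v; last by rewrite /= ?(negbTE nw) ?andbF /= ?if_same.
have [->|nt] := eqVneq t' s; last by rewrite /= ?(negbTE nt) ?andbF /= ?if_same.
rewrite /= !andbT.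
by case H: (nz _) => //=; rewrite (nz_rcons H).
Qed.

Lemma lmul0 a q : lmul a (fun _ => 0) q = 0.
Proof. by case: q => w [|b t] //=; rewrite /lmul /=; case: ifP. Qed.
Lemma rmul0 x q : rmul (fun _ => 0) x q = 0.
Proof. by case: q => w t; rewrite /rmul /=; case: (rev t) => // b s; case: ifP. Qed.
Lemma lmulZ a c x q : lmul a (fun q => c * x q) q = c * lmul a x q.
Proof. by case: q => w [|b t] //=; rewrite /lmul /= ?mulr0 //; case: ifP; rewrite ?mulr0. Qed.
Lemma rmulZ c x y q : rmul (fun q => c * x q) y q = c * rmul x y q.
Proof. by case: q => w t; rewrite /rmul /=; case: (rev t) => [|b s]; rewrite ?mulr0 //; case: ifP; rewrite ?mulr0. Qed.

Lemma noloop : triangular src tgt -> forall a, tgt a != src a.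
Proof. by move=> T a; have := T (src a) [:: a]; rewrite /= eqxx; apply. Qed.

Lemma card_eq (P : {pred Ar}) x y : (#|P| <= 1)%N -> x \in P -> y \in P -> x = y.
Proof. by move=> /card_le1_eqP H Hx Hy; apply: H. Qed.


Lemma path_comp a s : path (fun a b => tgt a == src b) a s -> comp_from src tgt (tgt a) s.
Proof.
elim: s a => [|b s IH] a //= /andP[/eqP -> H].
by rewrite eqxx IH.
Qed.

Lemma nz_first v b c s : nz (v, b :: c :: s) -> (tgt b == src c) && ~~ rel b c.
Proof.
rewrite /nzpath /= => /andP[/andP[_ /andP[h1 _]] /andP[h2 _]].
by rewrite eq_sym h1 h2.
Qed.

Lemma nz_last v c s x : nz (v, rcons (c :: s) x) -> (tgt (last c s) == src x) && ~~ rel (last c s) x.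
Proof.
rewrite /nzpath /= comp_rcons => /andP[/andP[_ h1]].
rewrite rcons_path => /andP[_ h2].
by move: h1 => /andP[_]; rewrite h2 andbT eq_sym last_map.
Qed.

End L.

Theorem lemma2p1 (k : fieldType) (V Ar : finType) (src tgt : Ar -> V)
    (rel : rel Ar) (n : nat) :
  triangular src tgt -> string_alg src tgt rel -> (2 <= n)%N ->
  (forall (a1 : Ar) (g' ps : seq Ar),
     in_Bminus src tgt rel n a1 g' ps ->
     in_image src tgt rel n
       (csub (fBm src tgt rel k n a1 g' ps) (fplus src tgt rel k n a1 g' ps)))
  /\
  (forall (a1 : Ar) (g'' : seq Ar) (an : Ar) (qs : seq Ar),
     in_Bplus src tgt rel n a1 g'' an qs ->
     in_image src tgt rel n
       (csub (gBp src tgt rel k n a1 g'' an qs) (gminus src tgt rel k n a1 g'' qs))).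
Proof.
move=> T S Hn; have Hn0 : (0 < n)%N by apply: leq_trans Hn.
have NL := noloop T.
split.
- move=> a1 g' ps /and3P[Hg Hnz Hpt].
  move: (Hg) => /and3P[Hsz Hcomp Hrel].
  case: g' Hg Hsz Hcomp Hrel Hpt => [|a2 r] Hg Hsz Hcomp Hrel Hpt.
    by move: Hsz Hn => /eqP <-.
  case: ps Hnz Hpt => [|c ps] Hnz Hpt.
    exfalso; move: Hcomp => /= /andP[/eqP E1 Hp].
    have := T (tgt a1) (a2 :: r) isT; rewrite /= E1 eqxx path_comp //= => /(_ isT).
    by rewrite /ptgt /= last_map -E1; move: Hpt; rewrite /ptgt /= eq_sym => ->.
  exists (fun h q => if h == a2 :: r then cls src tgt rel k (tgt a1, c :: ps) q else 0).
  split.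
  + move=> a g _ q /=; case: (a :: g =P a2 :: r) => [[-> ->]|]; last by rewrite eqxx.
    rewrite /cls; case: ifP => [/andP[Hnzp /eqP ->] _|]; last by rewrite eqxx.
    move: Hcomp => /= /andP[E1 _].
    by rewrite Hnzp /psrc /= E1; move: Hpt; rewrite /ptgt.
  + move=> g Hgam q.
    case: g Hgam => [|b g0] Hgam.
      by move: Hgam Hn => /and3P[/eqP <-].
    rewrite /delta prednK // /csub /fBm /fplus Hgam /=.
    have E2 : (b :: g0 == rcons (a2 :: r) (last b g0)) = (belast b g0 == a2 :: r).
      by rewrite (lastI b g0) eqseq_rcons eqxx andbT.
    rewrite E2 eqseq_cons.
    case: (g0 =P a2 :: r) => [E|NE].
    * subst g0.
      have -> : (belast b (a2 :: r) == a2 :: r) = false.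
        rewrite /= eqseq_cons; case: (b =P a2) => //= Eb; subst b.
        by move: Hgam => /and3P[_ /= /andP[/eqP Ht _] _]; move: (NL a2); rewrite Ht eqxx.
      rewrite /= rmul0 mulr0 addr0 lmul_cls andbT.
      case: (b =P a1) => [->|Nb]; first by rewrite eqxx subr0.
      rewrite subr0; case: eqP => // Et.
      rewrite /cls; case: ifP => // /andP[H1 _].
      exfalso; apply: Nb; apply: (card_eq ((S.2 c).2)).
        by rewrite inE; apply: nz_first H1.
      by rewrite inE; apply: nz_first Hnz.
    * rewrite andbF /= lmul0 add0r.
      case: (belast b g0 =P a2 :: r) => [EB|NB] /=.
        by rewrite rmul_cls exprS mulN1r mulNr sub0r opprK.
      by rewrite rmul0 mulr0 subr0.
- move=> a1 g'' an qs /and3P[Hg Hnz _].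
  move: (Hg) => /and3P[Hsz Hcomp Hrel].
  move: (Hcomp); rewrite /= rcons_path => /andP[Hp Hl].
  case: qs Hnz => [|c qs] Hnz.
    exfalso; move: Hnz; rewrite /nzpath /= !andbT => /eqP Es.
    have := T (src a1) (a1 :: g'') isT; rewrite /= eqxx path_comp //= => /(_ isT).
    by rewrite /ptgt /= last_map -Es; move: Hl => /eqP ->; rewrite eqxx.
  exists (fun h q => if h == a1 :: g'' then (-1) ^+ n * cls src tgt rel k (src a1, c :: qs) q else 0).
  split.
  + move=> a g _ q /=; case: (a :: g =P a1 :: g'') => [[-> ->]|]; last by rewrite eqxx.
    rewrite /cls; case: ifP => [/andP[Hnzp /eqP ->] _|]; last by rewrite mulr0 eqxx.
    rewrite Hnzp /psrc /= eqxx /=.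
    move: Hnz; rewrite /ptgt /nzpath comp_rcons => /andP[/andP[_ /eqP <-] _].
    by rewrite eq_sym.
  + move=> g Hgam q.
    case: g Hgam => [|b g0] Hgam.
      by move: Hgam Hn => /and3P[/eqP <-].
    rewrite /delta prednK // /csub /gBp /gminus Hgam /=.
    have E2 : (b :: g0 == a1 :: rcons g'' an) = (belast b g0 == a1 :: g'') && (last b g0 == an).
      by rewrite (lastI b g0) -rcons_cons eqseq_rcons.
    rewrite E2.
    case: (g0 =P a1 :: g'') => [E|NE].
    * subst g0.
      have -> : (belast b (a1 :: g'') == a1 :: g'') = false.
        rewrite /= eqseq_cons; case: (b =P a1) => //= Eb; subst b.
        by move: Hgam => /and3P[_ /= /andP[/eqP Ht _] _]; move: (NL a1); rewrite Ht eqxx.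
      have Ht : tgt b == src a1 by move: Hgam => /and3P[_ /= /andP[-> _] _].
      rewrite /= rmul0 mulr0 addr0 lmulZ lmul_cls Ht sub0r exprS mulN1r mulNr opprK.
      by [].
    * rewrite lmul0 add0r subr0.
      case: (belast b g0 =P a1 :: g'') => [EB|NB] /=; last by rewrite rmul0 mulr0.
      rewrite rmulZ rmul_cls mulrA -exprMn mulrNN mulr1 expr1n mul1r.
      case: (last b g0 =P an) => [->|Nx] //.
      rewrite /cls; case: ifP => // /andP[H1 _].
      exfalso; apply: Nx; apply: (card_eq ((S.2 (last c qs)).1)).
        by rewrite inE; apply: nz_last H1.
      by rewrite inE; apply: nz_last Hnz.
Qed.
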